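(* Let $p>1$ and $n>1$ be an integer. Let $f(z) = c_0 + c_1 z + c_2 z^2 + \dots$ be a bounded holomorphic function on $\mathbb D = \{z:|z|<1\}$ with no zeros in $\mathbb D$, belonging to $H^p$, which is not a polynomial of degree at most $n$. Then there exists $\varepsilon_0>0$ such that for every $\varepsilon<\varepsilon_0$ and every point $\mathbf d = (d_0, d_1, \dots, d_n) \in \mathbb C^{n+1}$ with $|\mathbf d| \le \varepsilon$ there is a bounded, zero-free holomorphic function $f^*(z) = c_0^* + c_1^* z + c_2^* z^2 + \dots \in H^p$ on $\mathbb D$ satisfying $c_j^* = c_j + d_j$ for all $j = 0, 1, \dots, n$ and $$\|f^*\|_p = \|f\|_p + O(\varepsilon),$$ i.e. $\bigl|\|f^*\|_p - \|f\|_p\bigr| \le C\varepsilon$ with a constant $C$ independent of $\mathbf d$ and $\varepsilon$.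
   Context: $H^p$ is the Hardy space of holomorphic functions on $\mathbb D$ with norm $\|f\|_p = \sup_{r<1}\bigl(\frac{1}{2\pi}\int_{-\pi}^{\pi}|f(re^{i\theta})|^p\,d\theta\bigr)^{1/p}$. $|\mathbf d|$ denotes the Euclidean norm on $\mathbb C^{n+1}$. *)

(* Defs.v *)
From Stdlib Require Import Reals.
From Coquelicot Require Import Coquelicot.
From Coquelicot Require Export Complex.
Open Scope R_scope.

Definition in_disc (z : C) : Prop := Cmod z < 1.

Definition holo_disc (f : C -> C) : Prop :=
  forall z : C, in_disc z -> ex_derive f z.

Definition bounded_disc (f : C -> C) : Prop :=
  exists M : R, forall z : C, in_disc z -> Cmod (f z) <= M.

Definition zero_free_disc (f : C -> C) : Prop :=
  forall z : C, in_disc z -> f z <> 0%C.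

Definition taylor_coeffs (f : C -> C) (c : nat -> C) : Prop :=
  forall z : C, in_disc z -> is_pseries c z (f z).

Definition poly_le_on_disc (f : C -> C) (n : nat) : Prop :=
  exists a : nat -> C, forall z : C, in_disc z ->
    f z = sum_n (fun k => (a k * z ^ k)%C) n.

(* x^p for x >= 0 and real p > 0, with the convention 0^p = 0. *)
Definition rpow (x p : R) : R := if Rle_dec x 0 then 0 else Rpower x p.

Definition Mp_mean (p : R) (f : C -> C) (r : R) : R :=
  / (2 * PI) * RInt (fun t => rpow (Cmod (f (r * cos t, r * sin t))) p) (- PI) PI.

Definition Hp_vals (p : R) (f : C -> C) (y : R) : Prop :=
  exists r : R, 0 <= r < 1 /\ y = rpow (Mp_mean p f r) (/ p).

Definition in_Hp (p : R) (f : C -> C) : Prop :=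
  holo_disc f /\ exists M : R, forall y, Hp_vals p f y -> y <= M.

Definition Hp_norm (p : R) (f : C -> C) : R := real (Lub_Rbar (Hp_vals p f)).

Definition eucl_norm (n : nat) (d : nat -> C) : R :=
  sqrt (sum_n (fun j => (Cmod (d j)) ^ 2) n).

(* Main.v *)
Require Import Defs.
From Stdlib Require Import Reals.
From Coquelicot Require Import Coquelicot.
From Coquelicot Require Import Complex.
From Stdlib Require Import Lra Lia.
Open Scope R_scope.

Lemma cont_pair (g h : R -> R) (t : R) :
  continuous g t -> continuous h t ->
  @continuous R_UniformSpace C_UniformSpace (fun s => (g s, h s)) t.
Proof.
  intros Hg Hh P [eps HP].
  assert (H1 := Hg _ (locally_ball (g t) eps)).
  assert (H2 := Hh _ (locally_ball (h t) eps)).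
  unfold filtermap in *.
  generalize (filter_and _ _ H1 H2). apply filter_imp.
  intros s [A B]. apply HP. split; assumption.
Qed.

Lemma cont_Cmod (z : C) : @continuous C_UniformSpace R_UniformSpace Cmod z.
Proof.
  destruct z as [a b].
  apply continuous_ext with (f := fun w : C => sqrt (fst w * fst w + snd w * snd w)).
  { intros [x y]. unfold Cmod. simpl. f_equal. ring. }
  apply (continuous_comp (U := C_UniformSpace) (fun w : C => fst w * fst w + snd w * snd w) sqrt).
  2: apply continuous_sqrt.
  apply (continuous_plus (U := C_UniformSpace) (K := R_AbsRing)
     (fun w : C => fst w * fst w) (fun w : C => snd w * snd w)).
  - apply (continuous_mult (U := C_UniformSpace) (K := R_AbsRing)); apply (continuous_fst (U:=R_UniformSpace) (V := R_UniformSpace)).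
  - apply (continuous_mult (U := C_UniformSpace) (K := R_AbsRing)); apply (continuous_snd (U:=R_UniformSpace) (V := R_UniformSpace)).
Qed.

Lemma holo_cont (F : C -> C) (w : C) : ex_derive F w ->
  @continuous C_UniformSpace C_UniformSpace F w.
Proof.
  intros H P HP. apply (ex_derive_continuous F w H) in HP.
  unfold filtermap in *. apply locally_C. exact HP.
Qed.

Lemma Cmod_circ r t : 0 <= r -> Cmod (r * cos t, r * sin t) = r.
Proof.
  intros Hr. unfold Cmod. simpl.
  replace (r * cos t * (r * cos t * 1) + r * sin t * (r * sin t * 1)) with (r ^ 2 * (Rsqr (sin t) + Rsqr (cos t))) by (unfold Rsqr; ring).
  rewrite sin2_cos2, Rmult_1_r.
  apply sqrt_pow2; auto.
Qed.

Lemma circ_in_disc r t : 0 <= r < 1 -> in_disc (r * cos t, r * sin t).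
Proof. intros [H1 H2]. unfold in_disc. rewrite Cmod_circ; auto. Qed.

Lemma circ_cont (p : R) (F : C -> C) (r t : R) : holo_disc F -> zero_free_disc F -> 0 <= r < 1 ->
  continuous (fun t => rpow (Cmod (F (r * cos t, r * sin t))) p) t.
Proof.
  intros Hh Hz Hr.
  assert (Hpos : forall s, 0 < Cmod (F (r * cos s, r * sin s))).
  { intros s. apply Cmod_gt_0. apply Hz. apply circ_in_disc; auto. }
  apply continuous_ext with (f := fun s => exp (p * ln (Cmod (F (r * cos s, r * sin s))))).
  { intros s. unfold rpow. destruct (Rle_dec _ 0) as [H|H].
    - specialize (Hpos s). lra.
    - reflexivity. }
  apply continuous_exp_comp.
  apply (continuous_scal_r (U := R_UniformSpace) (K := R_AbsRing) (V := R_NormedModule) p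
    (fun s => ln (Cmod (F (r * cos s, r * sin s))))).
  apply (continuous_comp (fun s => Cmod (F (r * cos s, r * sin s))) ln).
  2: apply continuous_ln; apply Hpos.
  apply (continuous_comp (U := R_UniformSpace) (V := C_UniformSpace) (fun s => F (r * cos s, r * sin s)) Cmod).
  2: apply cont_Cmod.
  apply (continuous_comp (U := R_UniformSpace) (V := C_UniformSpace) (W := C_UniformSpace) (fun s => (r * cos s, r * sin s)) F).
  2: apply holo_cont, Hh, circ_in_disc; auto.
  apply cont_pair.
  - apply (continuous_scal_r (U := R_UniformSpace) (K := R_AbsRing) (V := R_NormedModule) r cos).
    apply continuous_cos.
  - apply (continuous_scal_r (U := R_UniformSpace) (K := R_AbsRing) (V := R_NormedModule) r sin).
    apply continuous_sin.
Qed.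

Lemma circ_int (p : R) (F : C -> C) (r : R) : holo_disc F -> zero_free_disc F -> 0 <= r < 1 ->
  ex_RInt (fun t => rpow (Cmod (F (r * cos t, r * sin t))) p) (- PI) PI.
Proof.
  intros. apply (ex_RInt_continuous (V := R_CompleteNormedModule)). intros. apply circ_cont; auto.
Qed.

Fixpoint pre (c d : nat -> C) (k : nat) : nat -> C :=
  match k with
  | O => fun _ => (d 0%nat / c 0%nat)%C
  | S k' => fun i => if Nat.eqb i (S k')
      then ((d (S k') - sum_n (fun j => c (S k' - j)%nat * pre c d k' j) k') / c 0%nat)%C
      else pre c d k' i
  end.

Definition ecoef (c d : nat -> C) (i : nat) : C := pre c d i i.

Lemma pre_stable c d k i : (i <= k)%nat -> pre c d k i = ecoef c d i.
Proof.
  induction k; intros H.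
  - assert (i = 0%nat) by lia. subst. reflexivity.
  - destruct (Nat.eqb_spec i (S k)) as [E|E].
    + subst. reflexivity.
    + transitivity (pre c d k i).
      { cbn [pre]. apply Nat.eqb_neq in E. rewrite E. reflexivity. }
      apply IHk. lia.
Qed.

Lemma ecoef_S c d k : ecoef c d (S k) =
  ((d (S k) - sum_n (fun j => c (S k - j)%nat * ecoef c d j) k) / c 0%nat)%C.
Proof.
  unfold ecoef at 1. cbn [pre]. rewrite Nat.eqb_refl.
  erewrite (sum_n_ext_loc _ _ k). reflexivity.
  intros j Hj. simpl. rewrite pre_stable; auto.
Qed.

Lemma ecoef_0 c d : ecoef c d 0 = (d 0%nat / c 0%nat)%C.
Proof. reflexivity. Qed.

Lemma conv_ecoef (c d : nat -> C) k : c 0%nat <> 0%C ->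
  sum_n (fun j => c (k - j)%nat * ecoef c d j)%C k = d k.
Proof.
  intros Hc. destruct k.
  - rewrite sum_O. rewrite ecoef_0. simpl. field. auto.
  - rewrite sum_Sn. rewrite Nat.sub_diag. rewrite ecoef_S.
    change plus with Cplus. field_simplify; auto. 
Qed.

Lemma sum_nonneg (a : nat -> R) N : (forall j, 0 <= a j) -> 0 <= sum_n a N.
Proof.
  intros H. induction N. rewrite sum_O; auto. rewrite sum_Sn. change plus with Rplus.
  specialize (H (S N)). lra.
Qed.

Lemma sum_le_term (a : nat -> R) N i : (forall j, 0 <= a j) -> (i <= N)%nat -> a i <= sum_n a N.
Proof.
  intros H Hi. induction N.
  - assert (i = 0%nat) by lia. subst. rewrite sum_O. lra.
  - rewrite sum_Sn. change plus with Rplus.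
    destruct (Nat.eq_dec i (S N)).
    + subst. assert (0 <= sum_n a N) by (apply sum_nonneg; auto). lra.
    + assert (a i <= sum_n a N) by (apply IHN; lia). specialize (H (S N)). lra.
Qed.

Lemma Cmod_sum_le (g : nat -> C) (M : R) N :
  (forall j, (j <= N)%nat -> Cmod (g j) <= M) -> Cmod (sum_n g N) <= INR (S N) * M.
Proof.
  intros H. induction N.
  - rewrite sum_O. simpl. specialize (H 0%nat (le_n 0)). lra.
  - rewrite sum_Sn. change plus with Cplus.
    eapply Rle_trans. apply Cmod_triangle.
    rewrite S_INR. 
    assert (Cmod (sum_n g N) <= INR (S N) * M) by (apply IHN; intros; apply H; lia).
    assert (Cmod (g (S N)) <= M) by (apply H; lia). lra.
Qed.

Lemma Cmod_minus_le (a b : C) : Cmod (a - b) <= Cmod a + Cmod b.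
Proof.
  unfold Cminus. eapply Rle_trans. apply Cmod_triangle. rewrite Cmod_opp. lra.
Qed.

Definition Aco (c : nat -> C) (n : nat) := sum_n (fun i => Cmod (c i)) n.
Definition Bco (c : nat -> C) (n : nat) := 1 + (1 + Aco c n * INR n) / Cmod (c 0%nat).

Lemma Aco_ge0 (c : nat -> C) (n : nat) : 0 <= Aco c n.
Proof. apply sum_nonneg. intros; apply Cmod_ge_0. Qed.

Lemma m_pos (c : nat -> C) (Hc0 : c 0%nat <> 0%C) : 0 < Cmod (c 0%nat).
Proof. apply Cmod_gt_0; auto. Qed.

Lemma Bco_ge1 (c : nat -> C) (n : nat) (Hc0 : c 0%nat <> 0%C) : 1 <= Bco c n.
Proof.
  unfold Bco. assert (0 <= Aco c n * INR n) by (apply Rmult_le_pos; [apply (Aco_ge0 c n)| apply pos_INR]).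
  assert (0 < (1 + Aco c n * INR n) / Cmod (c 0%nat)).
  { apply Rdiv_lt_0_compat. lra. apply (m_pos c Hc0). } lra.
Qed.

Lemma Bco_eq (c : nat -> C) (n : nat) (Hc0 : c 0%nat <> 0%C) : (Bco c n - 1) * Cmod (c 0%nat) = 1 + Aco c n * INR n.
Proof. unfold Bco. field. apply Rgt_not_eq, (m_pos c Hc0). Qed.

Lemma ecoef_bound (c d : nat -> C) (n : nat) (eps : R) (Hc0 : c 0%nat <> 0%C) (Heps : 0 <= eps)
  (Hd : forall j, (j <= n)%nat -> Cmod (d j) <= eps) : forall k, (k <= n)%nat -> forall i, (i <= k)%nat ->
  Cmod (ecoef c d i) <= Bco c n ^ (S i) * eps.
Proof.
  assert (Hm := (m_pos c Hc0)). assert (HB := (Bco_ge1 c n Hc0)). assert (HBe := (Bco_eq c n Hc0)). assert (HA := (Aco_ge0 c n)).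
  induction k; intros Hk i Hi.
  - assert (i = 0%nat) by lia. subst. rewrite ecoef_0. rewrite Cmod_div; auto.
    assert (Cmod (d 0%nat) <= eps) by (apply Hd; lia).
    simpl. rewrite Rmult_1_r.
    apply (Rmult_le_reg_r (Cmod (c 0%nat))); auto.
    unfold Rdiv. rewrite Rmult_assoc, Rinv_l by lra. rewrite Rmult_1_r.
    assert (Bco c n * Cmod (c 0%nat) >= 1).
    { assert (0 <= Aco c n * INR n) by (apply Rmult_le_pos; [auto| apply pos_INR]). nra. }
    nra.
  - destruct (Nat.eq_dec i (S k)) as [E|E]; [| apply IHk; lia].
    subst i. rewrite ecoef_S. rewrite Cmod_div; auto.
    set (P := Bco c n ^ S k).
    assert (HP : 1 <= P) by (unfold P; apply pow_R1_Rle; auto).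
    assert (Hs : Cmod (sum_n (fun j => (c (S k - j)%nat * ecoef c d j)%C) k) <= INR (S k) * (Aco c n * (P * eps))).
    { apply Cmod_sum_le. intros j Hj. rewrite Cmod_mult.
      assert (H1 : Cmod (c (S k - j)%nat) <= Aco c n).
      { unfold Aco. apply (sum_le_term (fun i => Cmod (c i))). intros; apply Cmod_ge_0. lia. }
      assert (H2 : Cmod (ecoef c d j) <= Bco c n ^ S j * eps) by (apply IHk; lia).
      assert (H3 : Bco c n ^ S j <= P) by (unfold P; apply Rle_pow; auto; lia).
      assert (0 <= Bco c n ^ S j * eps) by (apply Rmult_le_pos; [apply pow_le; lra | auto]).
      apply Rmult_le_compat; auto using Cmod_ge_0. nra. }
    assert (Hdk : Cmod (d (S k)) <= eps) by (apply Hd; lia).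
    assert (Hn : INR (S k) <= INR n) by (apply le_INR; lia).
    apply (Rmult_le_reg_r (Cmod (c 0%nat))); auto.
    unfold Rdiv. rewrite Rmult_assoc, Rinv_l by lra. rewrite Rmult_1_r.
    eapply Rle_trans. apply Cmod_minus_le.
    change (Bco c n ^ S (S k)) with (Bco c n * P).
    assert (INR (S k) * (Aco c n * (P * eps)) <= INR n * Aco c n * P * eps).
    { assert (0 <= Aco c n * P * eps) by (apply Rmult_le_pos; [nra| auto]). nra. }
    assert (eps <= P * eps) by nra.
    assert (Bco c n * P * eps * Cmod (c 0%nat) = P * eps * (Bco c n * Cmod (c 0%nat))) by ring.
    assert (Bco c n * Cmod (c 0%nat) >= 1 + Aco c n * INR n) by nra.
    assert (0 <= P * eps) by nra.
    nra.
Qed.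

Definition Qp (e : nat -> C) (n : nat) (z : C) : C :=
  sum_n (fun j => (e j * @pow_n C_Ring z j)%C) n.
Definition fsc (f : C -> C) (e : nat -> C) (n : nat) (z : C) : C :=
  (f z * (1 + Qp e n z))%C.
Definition csc (c e : nat -> C) (n : nat) (k : nat) : C :=
  (c k + sum_n (fun j => if Compare_dec.le_lt_dec j k then (e j * c (k - j)%nat)%C else RtoC 0) n)%C.

Lemma Cmod_pow_n (z : C) j : Cmod (@pow_n C_Ring z j) = Cmod z ^ j.
Proof.
  induction j. simpl. apply Cmod_1.
  simpl. change (mult z (pow_n z j)) with (z * @pow_n C_Ring z j)%C.
  rewrite Cmod_mult, IHj. reflexivity.
Qed.

Lemma pow_le_1' x j : 0 <= x <= 1 -> x ^ j <= 1.
Proof.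
  intros H. induction j. simpl; lra. simpl.
  assert (0 <= x ^ j) by (apply pow_le; lra). nra.
Qed.

Lemma Qp_bound e n z M : in_disc z -> (forall j, (j <= n)%nat -> Cmod (e j) <= M) ->
  Cmod (Qp e n z) <= INR (S n) * M.
Proof.
  intros Hz H. apply Cmod_sum_le. intros j Hj. rewrite Cmod_mult, Cmod_pow_n.
  assert (Cmod z ^ j <= 1). { apply pow_le_1'. split. apply Cmod_ge_0. unfold in_disc in Hz. lra. }
  assert (0 <= Cmod z ^ j) by (apply pow_le, Cmod_ge_0).
  specialize (H j Hj). assert (0 <= Cmod (e j)) by apply Cmod_ge_0. nra.
Qed.

Lemma der_CtoA f z l : @is_derive C_AbsRing C_NormedModule f z l -> @is_derive C_AbsRing (AbsRing_NormedModule C_AbsRing) f z l.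
Proof.
  intros H. unfold is_derive, filterdiff, is_domin in *.
  destruct H as [H1 H4]. split. 2: exact H4.
  destruct H1 as [a b cc]. constructor. exact a. exact b. exact cc.
Qed.

Lemma der_AtoC f z l : @is_derive C_AbsRing (AbsRing_NormedModule C_AbsRing) f z l -> @is_derive C_AbsRing C_NormedModule f z l.
Proof.
  intros H. unfold is_derive, filterdiff, is_domin in *.
  destruct H as [H1 H4]. split. 2: exact H4.
  destruct H1 as [a b cc]. constructor. exact a. exact b. exact cc.
Qed.

Lemma ex_derive_multC (f g : C -> C) (z : C) :
  @ex_derive C_AbsRing C_NormedModule f z -> @ex_derive C_AbsRing C_NormedModule g z ->
  @ex_derive C_AbsRing C_NormedModule (fun x => (f x * g x)%C) z.
Proof.
  intros [df Hf] [dg Hg].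
  assert (H := is_derive_mult (K := C_AbsRing) f g z df dg (der_CtoA _ _ _ Hf) (der_CtoA _ _ _ Hg) (fun a b => Cmult_comm a b)).
  exists (plus (mult df (g z)) (mult (f z) dg)). apply der_AtoC. exact H.
Qed.

Lemma ex_derive_pow_n (z : C) j : @ex_derive C_AbsRing C_NormedModule (fun x => @pow_n C_Ring x j) z.
Proof.
  induction j.
  - apply (ex_derive_ext (K := C_AbsRing) (V := C_NormedModule) (fun _ => RtoC 1)). intros; reflexivity.
    apply (ex_derive_const (K := C_AbsRing) (V := C_NormedModule)).
  - apply (ex_derive_ext (K := C_AbsRing) (V := C_NormedModule) (fun x => (x * @pow_n C_Ring x j)%C)). intros; reflexivity.
    apply (ex_derive_multC (fun x => x) (fun x => @pow_n C_Ring x j)); auto.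
    destruct (ex_derive_id (K := C_AbsRing) z) as [l Hl]. exists l. apply der_AtoC. exact Hl.
Qed.

Lemma ex_derive_sumC (g : nat -> C -> C) N z :
  (forall j, @ex_derive C_AbsRing C_NormedModule (g j) z) ->
  @ex_derive C_AbsRing C_NormedModule (fun x => sum_n (fun j => g j x) N) z.
Proof.
  intros H. induction N.
  - eapply (ex_derive_ext (K := C_AbsRing) (V := C_NormedModule) (g 0%nat)). intros; rewrite sum_O; auto. auto.
  - eapply (ex_derive_ext (K := C_AbsRing) (V := C_NormedModule) (fun x => plus (sum_n (fun j => g j x) N) (g (S N) x))).
    intros; rewrite sum_Sn; auto.
    apply (ex_derive_plus (K := C_AbsRing) (V := C_NormedModule)); auto.
Qed.

Lemma fsc_holo f e n : holo_disc f -> holo_disc (fsc f e n).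
Proof.
  intros Hf z Hz. unfold fsc.
  apply ex_derive_multC. apply Hf; auto.
  apply (ex_derive_plus (K := C_AbsRing) (V := C_NormedModule) (fun _ => RtoC 1) (Qp e n)).
  apply (ex_derive_const (K := C_AbsRing) (V := C_NormedModule)).
  unfold Qp. apply (ex_derive_sumC (fun j x => (e j * @pow_n C_Ring x j)%C)).
  intros j. apply ex_derive_multC. apply (ex_derive_const (K := C_AbsRing) (V := C_NormedModule)).
  apply ex_derive_pow_n.
Qed.

Lemma taylor_term (c : nat -> C) (a : C) j z l :
  is_pseries c z l ->
  is_pseries (fun k => if Compare_dec.le_lt_dec j k then (a * c (k - j)%nat)%C else RtoC 0) z
    (a * (@pow_n C_Ring z j * l))%C.
Proof.
  intros H.
  assert (H1 := is_pseries_incr_n c j z l H).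
  assert (H2 := is_pseries_scal (K := C_AbsRing) (V := C_NormedModule) a _ z _ (Cmult_comm z a) H1).
  eapply is_pseries_ext. 2: exact H2.
  intros k. unfold PS_scal. rewrite PS_incr_n_simplify.
  destruct (Compare_dec.le_lt_dec j k). reflexivity.
  change (a * RtoC 0 = RtoC 0)%C. apply Cmult_0_r.
Qed.

Lemma taylor_sum (c e : nat -> C) N z l :
  is_pseries c z l ->
  is_pseries (fun k => sum_n (fun j => if Compare_dec.le_lt_dec j k then (e j * c (k - j)%nat)%C else RtoC 0) N) z
    (sum_n (fun j => e j * (@pow_n C_Ring z j * l))%C N).
Proof.
  intros H. induction N.
  - eapply is_pseries_ext. 2: rewrite sum_O; apply taylor_term; exact H.
    intros k. rewrite sum_O. reflexivity.
  - rewrite sum_Sn.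
    assert (H2 := is_pseries_plus _ _ _ _ _ IHN (taylor_term c (e (S N)) (S N) z l H)).
    eapply is_pseries_ext. 2: exact H2.
    intros k. unfold PS_plus. rewrite sum_Sn. reflexivity.
Qed.

Lemma fsc_taylor f c e n : taylor_coeffs f c -> taylor_coeffs (fsc f e n) (csc c e n).
Proof.
  intros Ht z Hz. specialize (Ht z Hz).
  assert (H := is_pseries_plus _ _ z _ _ Ht (taylor_sum c e n z (f z) Ht)).
  eapply is_pseries_ext in H. 2: intros k; unfold PS_plus; reflexivity.
  replace (fsc f e n z) with (plus (f z) (sum_n (fun j => e j * (@pow_n C_Ring z j * f z))%C n)).
  exact H.
  unfold fsc, Qp.
  rewrite (sum_n_ext _ (fun j => mult (f z) (e j * @pow_n C_Ring z j)%C)).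
  2: intros j; change (@eq C (e j * (@pow_n C_Ring z j * f z))%C (f z * (e j * @pow_n C_Ring z j))%C); ring.
  rewrite sum_n_mult_l.
  change (@eq C (Cplus (f z) (Cmult (f z) (sum_n (fun k => (e k * @pow_n C_Ring z k)%C) n))) (Cmult (f z) (Cplus (RtoC 1) (sum_n (fun k => (e k * @pow_n C_Ring z k)%C) n)))). ring.
Qed.

Lemma sum_cut (g : nat -> C) k n : (k <= n)%nat ->
  sum_n (fun j => if Compare_dec.le_lt_dec j k then g j else RtoC 0) n = sum_n g k.
Proof.
  intros H. induction n.
  - assert (k = 0%nat) by lia. subst. rewrite !sum_O. reflexivity.
  - destruct (Nat.eq_dec k (S n)).
    + subst. apply sum_n_ext_loc. intros j Hj. destruct (Compare_dec.le_lt_dec j (S n)); [reflexivity| lia].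
    + rewrite sum_Sn, IHn by lia. destruct (Compare_dec.le_lt_dec (S n) k). lia.
      change plus with Cplus. apply Cplus_0_r.
Qed.

Lemma csc_eq (c d : nat -> C) n k : c 0%nat <> RtoC 0 -> (k <= n)%nat ->
  csc c (ecoef c d) n k = (c k + d k)%C.
Proof.
  intros Hc Hk. unfold csc. rewrite sum_cut by auto.
  rewrite <- (conv_ecoef c d k Hc). f_equal. apply sum_n_ext. intros j. apply Cmult_comm.
Qed.

Lemma rpow_nonneg x p : 0 <= rpow x p.
Proof. unfold rpow. destruct (Rle_dec x 0). lra. unfold Rpower. left; apply exp_pos. Qed.

Lemma rpow_pos x p : 0 < x -> rpow x p = Rpower x p.
Proof. intros H. unfold rpow. destruct (Rle_dec x 0). lra. reflexivity. Qed.

Lemma Rpower_pos x p : 0 < Rpower x p.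
Proof. unfold Rpower. apply exp_pos. Qed.

Lemma rpow_scale_up (lam p x y : R) : 0 < lam -> 0 < p -> 0 <= x ->
  y <= Rpower lam p * x -> rpow y (/ p) <= lam * rpow x (/ p).
Proof.
  intros Hl Hp Hx Hy.
  destruct (Rle_dec y 0) as [Hy0|Hy0].
  { unfold rpow at 1. destruct (Rle_dec y 0); [|lra].
    assert (0 <= rpow x (/p)) by apply rpow_nonneg. nra. }
  assert (Hx0 : 0 < x).
  { destruct Hx as [Hx|Hx]; auto. subst. rewrite Rmult_0_r in Hy. lra. }
  rewrite !rpow_pos by lra.
  eapply Rle_trans. apply Rle_Rpower_l. left; apply Rinv_0_lt_compat; auto. split. lra. exact Hy.
  rewrite <- Rpower_mult_distr by (auto using Rpower_pos).
  rewrite Rpower_mult. rewrite Rinv_r by lra. rewrite Rpower_1 by auto. lra.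
Qed.

Lemma rpow_scale_dn (lam p x y : R) : 0 < lam -> 0 < p -> 0 <= x ->
  Rpower lam p * x <= y -> lam * rpow x (/ p) <= rpow y (/ p).
Proof.
  intros Hl Hp Hx Hy.
  destruct Hx as [Hx0|Hx0].
  2: { subst. unfold rpow at 1. destruct (Rle_dec 0 0); [|lra]. rewrite Rmult_0_r. apply rpow_nonneg. }
  assert (0 < Rpower lam p * x) by (apply Rmult_lt_0_compat; auto using Rpower_pos).
  rewrite !rpow_pos by lra.
  rewrite <- (Rpower_1 lam) at 1 by auto.
  rewrite <- (Rinv_r p) by lra. rewrite <- Rpower_mult.
  rewrite Rpower_mult_distr by (auto using Rpower_pos).
  apply Rle_Rpower_l. left; apply Rinv_0_lt_compat; auto. split; lra.
Qed.

Lemma Mp_compare (p : R) (F G : C -> C) (u : C -> R) (lo hi r : R) :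
  0 < p -> holo_disc F -> zero_free_disc F -> holo_disc G -> zero_free_disc G ->
  0 < lo ->
  (forall w, in_disc w -> Cmod (G w) = Cmod (F w) * u w /\ lo <= u w <= hi) ->
  0 <= r < 1 ->
  0 <= Mp_mean p F r /\
  Rpower lo p * Mp_mean p F r <= Mp_mean p G r /\
  Mp_mean p G r <= Rpower hi p * Mp_mean p F r.
Proof.
  intros Hp HF HFz HG HGz Hlo Hu Hr.
  assert (IF := circ_int p F r HF HFz Hr).
  assert (IG := circ_int p G r HG HGz Hr).
  assert (Hpi : -PI <= PI) by (assert (0 < PI) by apply PI_RGT_0; lra).
  assert (Hc : 0 < / (2 * PI)) by (apply Rinv_0_lt_compat; assert (0 < PI) by apply PI_RGT_0; lra).
  assert (Hpt : forall t, rpow (Cmod (G (r * cos t, r * sin t))) p =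
     rpow (Cmod (F (r * cos t, r * sin t))) p * Rpower (u (r * cos t, r * sin t)) p
     /\ lo <= u (r * cos t, r * sin t) <= hi).
  { intros t. assert (Hd := circ_in_disc r t Hr).
    destruct (Hu _ Hd) as [E Hb]. split; auto. rewrite E.
    assert (0 < Cmod (F (r * cos t, r * sin t))) by (apply Cmod_gt_0, HFz, Hd).
    rewrite !rpow_pos. apply eq_sym, Rpower_mult_distr; lra. auto.
    apply Rmult_lt_0_compat; lra. }
  unfold Mp_mean.
  assert (H0 : 0 <= RInt (fun t => rpow (Cmod (F (r * cos t, r * sin t))) p) (- PI) PI).
  { apply RInt_ge_0; auto. intros; apply rpow_nonneg. }
  assert (L1 : Rpower lo p * RInt (fun t => rpow (Cmod (F (r * cos t, r * sin t))) p) (- PI) PI <=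
               RInt (fun t => rpow (Cmod (G (r * cos t, r * sin t))) p) (- PI) PI).
  { assert (E := RInt_scal (V := R_CompleteNormedModule) (fun t => rpow (Cmod (F (r * cos t, r * sin t))) p) (- PI) PI (Rpower lo p) IF).
    change (scal (Rpower lo p) (RInt (fun t => rpow (Cmod (F (r * cos t, r * sin t))) p) (- PI) PI)) with
      (Rpower lo p * RInt (fun t => rpow (Cmod (F (r * cos t, r * sin t))) p) (- PI) PI) in E.
    rewrite <- E. apply RInt_le; auto.
    apply (ex_RInt_scal (V := R_CompleteNormedModule)); auto.
    intros t _. change (scal (Rpower lo p) (rpow (Cmod (F (r * cos t, r * sin t))) p)) with
      (Rpower lo p * rpow (Cmod (F (r * cos t, r * sin t))) p).
    destruct (Hpt t) as [E1 [E2 E3]]. rewrite E1.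
    assert (Rpower lo p <= Rpower (u (r * cos t, r * sin t)) p) by (apply Rle_Rpower_l; lra).
    assert (0 <= rpow (Cmod (F (r * cos t, r * sin t))) p) by apply rpow_nonneg. nra. }
  assert (L2 : RInt (fun t => rpow (Cmod (G (r * cos t, r * sin t))) p) (- PI) PI <=
               Rpower hi p * RInt (fun t => rpow (Cmod (F (r * cos t, r * sin t))) p) (- PI) PI).
  { assert (E := RInt_scal (V := R_CompleteNormedModule) (fun t => rpow (Cmod (F (r * cos t, r * sin t))) p) (- PI) PI (Rpower hi p) IF).
    change (scal (Rpower hi p) (RInt (fun t => rpow (Cmod (F (r * cos t, r * sin t))) p) (- PI) PI)) with
      (Rpower hi p * RInt (fun t => rpow (Cmod (F (r * cos t, r * sin t))) p) (- PI) PI) in E.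
    rewrite <- E. apply RInt_le; auto.
    apply (ex_RInt_scal (V := R_CompleteNormedModule)); auto.
    intros t _. change (scal (Rpower hi p) (rpow (Cmod (F (r * cos t, r * sin t))) p)) with
      (Rpower hi p * rpow (Cmod (F (r * cos t, r * sin t))) p).
    destruct (Hpt t) as [E1 [E2 E3]]. rewrite E1.
    assert (Rpower (u (r * cos t, r * sin t)) p <= Rpower hi p) by (apply Rle_Rpower_l; lra).
    assert (0 <= rpow (Cmod (F (r * cos t, r * sin t))) p) by apply rpow_nonneg. nra. }
  set (IFv := RInt (fun t => rpow (Cmod (F (r * cos t, r * sin t))) p) (- PI) PI) in *.
  set (IGv := RInt (fun t => rpow (Cmod (G (r * cos t, r * sin t))) p) (- PI) PI) in *.
  split; [|split]; nra.
Qed.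

Lemma lub_ge (E : R -> Prop) y M : (forall x, E x -> x <= M) -> E y -> y <= real (Lub_Rbar E).
Proof.
  intros HM Hy. destruct (Lub_Rbar_correct E) as [Hub Hlub].
  assert (H1 := Hub y Hy). assert (H2 := Hlub (Finite M) HM).
  destruct (Lub_Rbar E); simpl in *; auto; contradiction.
Qed.

Lemma lub_le (E : R -> Prop) y0 b : E y0 -> (forall x, E x -> x <= b) -> real (Lub_Rbar E) <= b.
Proof.
  intros Hy HM. destruct (Lub_Rbar_correct E) as [Hub Hlub].
  assert (H1 := Hub y0 Hy). assert (H2 := Hlub (Finite b) HM).
  destruct (Lub_Rbar E); simpl in *; auto; try contradiction.
Qed.

Theorem proposition2 (p : R) (n : nat) (f : C -> C) (c : nat -> C) :
  1 < p -> (1 < n)%nat ->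
  holo_disc f -> bounded_disc f -> zero_free_disc f -> in_Hp p f ->
  taylor_coeffs f c ->
  ~ poly_le_on_disc f n ->
  exists eps0 : R, 0 < eps0 /\
  exists K : R,
    forall (eps : R) (d : nat -> C),
      eps < eps0 -> eucl_norm n d <= eps ->
      exists (fs : C -> C) (cs : nat -> C),
        holo_disc fs /\ bounded_disc fs /\ zero_free_disc fs /\ in_Hp p fs /\
        taylor_coeffs fs cs /\
        (forall j : nat, (j <= n)%nat -> cs j = (c j + d j)%C) /\
        Rabs (Hp_norm p fs - Hp_norm p f) <= K * eps.
Proof.
  intros Hp Hn Hh Hb Hz HHp Ht Hnp.
  assert (Hd0 : in_disc (RtoC 0)). { unfold in_disc. rewrite Cmod_0. lra. }
  assert (Hc0 : c 0%nat <> RtoC 0).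
  { assert (E : c 0%nat = f (RtoC 0)).
    { apply (filterlim_locally_unique (F := eventually) (sum_n (fun k => scal (@pow_n C_Ring (RtoC 0) k) (c k)))).
      exact (is_pseries_0 (K:=C_AbsRing) (V:=C_NormedModule) c).
      exact (Ht _ Hd0). }
    rewrite E. apply Hz, Hd0. }
  set (B := Bco c n). set (Cc := INR (S n) * B ^ (S n)).
  assert (HB : 1 <= B) by (apply Bco_ge1; auto).
  assert (HCc : 0 < Cc).
  { unfold Cc. apply Rmult_lt_0_compat. apply lt_0_INR; lia. apply pow_lt; lra. }
  exists (/ (2 * Cc)). split. apply Rinv_0_lt_compat; lra.
  exists (Cc * Hp_norm p f).
  intros eps d Heps Hd.
  assert (Heps0 : 0 <= eps) by (eapply Rle_trans; [apply sqrt_pos| exact Hd]).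
  assert (Hdj : forall j, (j <= n)%nat -> Cmod (d j) <= eps).
  { intros j Hj. eapply Rle_trans; [|exact Hd]. unfold eucl_norm.
    rewrite <- (sqrt_pow2 (Cmod (d j))) by apply Cmod_ge_0. apply sqrt_le_1_alt.
    apply (sum_le_term (fun j => Cmod (d j) ^ 2)). intros; apply pow2_ge_0. auto. }
  set (e := ecoef c d).
  assert (He : forall j, (j <= n)%nat -> Cmod (e j) <= B ^ S n * eps).
  { intros j Hj. eapply Rle_trans. apply (ecoef_bound c d n eps Hc0 Heps0 Hdj n (le_n n) j Hj).
    apply Rmult_le_compat_r; auto. apply Rle_pow; auto; lia. }
  set (a := Cc * eps).
  assert (Ha : a < 1/2).
  { assert (E : Cc * / (2 * Cc) = 1/2) by (field; lra). unfold a. rewrite <- E.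
    apply Rmult_lt_compat_l; auto. }
  assert (Ha0 : 0 <= a) by (unfold a; nra).
  assert (HQ : forall w, in_disc w -> Cmod (Qp e n w) <= a).
  { intros w Hw. unfold a, Cc. rewrite Rmult_assoc. apply Qp_bound; auto. }
  set (fs := fsc f e n).
  assert (Hu : forall w, in_disc w -> Cmod (fs w) = Cmod (f w) * Cmod (1 + Qp e n w) /\
                 1 - a <= Cmod (1 + Qp e n w) <= 1 + a).
  { intros w Hw. split. unfold fs, fsc. apply Cmod_mult.
    assert (H1 := HQ w Hw). split.
    - assert (H2 : Cmod (RtoC 1) <= Cmod (1 + Qp e n w) + Cmod (Qp e n w)).
      { replace (RtoC 1) with ((1 + Qp e n w) - Qp e n w)%C at 1 by ring. apply Cmod_minus_le. }
      rewrite Cmod_1 in H2. lra.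
    - eapply Rle_trans. apply Cmod_triangle. rewrite Cmod_1. lra. }
  assert (Hfs_h : holo_disc fs) by (apply fsc_holo; auto).
  assert (Hfs_z : zero_free_disc fs).
  { intros w Hw. unfold fs, fsc. apply Cmult_neq_0. apply Hz; auto.
    intros E. destruct (Hu w Hw) as [_ [H1 _]]. rewrite E, Cmod_0 in H1. lra. }
  assert (Hp0 : 0 < p) by lra.
  assert (Hcmp : forall r, 0 <= r < 1 ->
     0 <= Mp_mean p f r /\
     rpow (Mp_mean p fs r) (/ p) <= (1 + a) * rpow (Mp_mean p f r) (/ p) /\
     (1 - a) * rpow (Mp_mean p f r) (/ p) <= rpow (Mp_mean p fs r) (/ p)).
  { intros r Hr.
    destruct (Mp_compare p f fs (fun w => Cmod (1 + Qp e n w)) (1 - a) (1 + a) r Hp0 Hh Hz Hfs_h Hfs_z)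
      as [M0 [M1 M2]]; auto. lra.
    split; auto. split.
    - apply rpow_scale_up; auto. lra.
    - apply rpow_scale_dn; auto. lra. }
  exists fs, (csc c e n).
  destruct HHp as [_ [Mf HMf]].
  assert (Hvf : forall r, 0 <= r < 1 -> Hp_vals p f (rpow (Mp_mean p f r) (/ p))).
  { intros r Hr. exists r. split; auto. }
  assert (Hvg : forall r, 0 <= r < 1 -> Hp_vals p fs (rpow (Mp_mean p fs r) (/ p))).
  { intros r Hr. exists r. split; auto. }
  assert (Hr0 : 0 <= 0 < 1) by lra.
  assert (HgB : forall y, Hp_vals p fs y -> y <= (1 + a) * Mf).
  { intros y [r [Hr Ey]]. subst y. destruct (Hcmp r Hr) as [_ [H1 _]].
    assert (rpow (Mp_mean p f r) (/ p) <= Mf) by (apply HMf, Hvf, Hr). nra. }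
  split; [|split; [|split; [|split; [|split; [|split]]]]].
  - exact Hfs_h.
  - destruct Hb as [M HM]. exists (M * (1 + a)). intros w Hw.
    destruct (Hu w Hw) as [E [_ H2]]. rewrite E.
    assert (H3 := HM w Hw). assert (0 <= Cmod (f w)) by apply Cmod_ge_0.
    assert (0 <= Cmod (1 + Qp e n w)) by apply Cmod_ge_0. nra.
  - exact Hfs_z.
  - split; auto. exists ((1 + a) * Mf). exact HgB.
  - apply fsc_taylor; auto.
  - intros j Hj. apply csc_eq; auto.
  - set (s := Hp_norm p f). set (t := Hp_norm p fs).
    assert (Hs0 : 0 <= s).
    { eapply Rle_trans. apply (rpow_nonneg (Mp_mean p f 0) (/ p)).
      apply (lub_ge _ _ Mf); auto. }
    assert (Ht1 : t <= (1 + a) * s).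
    { apply (lub_le _ _ _ (Hvg 0 Hr0)). intros y [r [Hr Ey]]. subst y.
      destruct (Hcmp r Hr) as [_ [H1 _]].
      assert (rpow (Mp_mean p f r) (/ p) <= s) by (apply (lub_ge _ _ Mf); auto).
      nra. }
    assert (Ht2 : s <= t / (1 - a)).
    { apply (lub_le _ _ _ (Hvf 0 Hr0)). intros y [r [Hr Ey]]. subst y.
      destruct (Hcmp r Hr) as [_ [_ H1]].
      assert (rpow (Mp_mean p fs r) (/ p) <= t) by (apply (lub_ge _ _ ((1 + a) * Mf)); auto).
      apply (Rmult_le_reg_r (1 - a)). lra. unfold Rdiv. rewrite Rmult_assoc, Rinv_l by lra. lra. }
    assert (Ht3 : (1 - a) * s <= t).
    { apply (Rmult_le_compat_l (1 - a)) in Ht2; [|lra].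
      unfold Rdiv in Ht2. rewrite (Rmult_comm t), <- Rmult_assoc, Rinv_r, Rmult_1_l in Ht2 by lra. lra. }
    replace (Cc * s * eps) with (a * s) by (unfold a; ring).
    apply Rabs_le. split; nra.
Qed.
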